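(* Let $S$ be an inverse semigroup, let $\alpha$ be an automorphism of $S$, and define $\psi : S\to S$ by $x\psi = x^{-1}\cdot (x\alpha)$ for all $x\in S$. Then: (1) If $\mathrm{Fix}(\alpha) = E(S)$, then $\psi$ is injective. (2) If $\psi$ is injective, then $\mathrm{Fix}(\alpha)\subseteq E(S)$.
   Context: In an inverse semigroup $S$, $x^{-1}$ denotes the unique inverse of $x$ (the unique element with $xx^{-1}x=x$ and $x^{-1}xx^{-1}=x^{-1}$). $E(S)$ is the set of idempotents of $S$; for an automorphism $\alpha$ of $S$ (written on the right, $x\mapsto x\alpha$), $\mathrm{Fix}(\alpha) = \{x\in S \mid x\alpha = x\}$. *)

(* Defs.v *)
From Stdlib Require Import Setoid.

Record InverseSemigroup := {
  carrier :> Type;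
  smul : carrier -> carrier -> carrier;
  sinv : carrier -> carrier;
  smul_assoc : forall x y z, smul x (smul y z) = smul (smul x y) z;
  sinv_l : forall x, smul (smul x (sinv x)) x = x;
  sinv_r : forall x, smul (smul (sinv x) x) (sinv x) = sinv x;
  sinv_unique : forall x y, smul (smul x y) x = x -> smul (smul y x) y = y -> y = sinv x
}.

Arguments smul {i} _ _.
Arguments sinv {i} _.

Definition is_idempotent {S : InverseSemigroup} (e : S) : Prop := smul e e = e.

Definition is_automorphism {S : InverseSemigroup} (a : S -> S) : Prop :=
  (forall x y, a (smul x y) = smul (a x) (a y)) /\
  (forall x y, a x = a y -> x = y) /\
  (forall y, exists x, a x = y).

Definition is_fixed {S : InverseSemigroup} (a : S -> S) (x : S) : Prop := a x = x.

Definition psi {S : InverseSemigroup} (a : S -> S) (x : S) : S := smul (sinv x) (a x).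

(* Main.v *)
Require Import Defs.

Section IS.
Variable S : InverseSemigroup.
Local Notation "x ** y" := (@smul S x y) (at level 40, left associativity).
Local Notation "x ^-" := (@sinv S x) (at level 20).

Lemma A (x y z : S) : x ** (y ** z) = x ** y ** z.
Proof. apply smul_assoc. Qed.

Lemma inv_inv (x : S) : (x ^-) ^- = x.
Proof. symmetry. apply sinv_unique; [apply sinv_r | apply sinv_l]. Qed.

Lemma idem_inv (e : S) : e ** e = e -> e ^- = e.
Proof. intro H. symmetry. apply sinv_unique; rewrite H; exact H. Qed.

Lemma rid (x : S) : x ** x ^- ** (x ** x ^-) = x ** x ^-.
Proof. rewrite A, sinv_l. reflexivity. Qed.

Lemma lid (x : S) : x ^- ** x ** (x ^- ** x) = x ^- ** x.
Proof. rewrite A, sinv_r. reflexivity. Qed.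

Lemma idem_mul (e f : S) : e ** e = e -> f ** f = f -> e ** f ** (e ** f) = e ** f.
Proof.
  intros He Hf.
  set (z := (e ** f) ^-).
  assert (Hz : f ** z ** e = z).
  { apply sinv_unique.
    - replace (e ** f ** (f ** z ** e) ** (e ** f)) with (e ** (f ** f) ** z ** (e ** e) ** f)
        by (rewrite !A; reflexivity).
      rewrite He, Hf. replace (e ** f ** z ** e ** f) with (e ** f ** z ** (e ** f)) by (rewrite !A; reflexivity).
      apply sinv_l.
    - replace (f ** z ** e ** (e ** f) ** (f ** z ** e)) with (f ** z ** (e ** e) ** (f ** f) ** z ** e)
        by (rewrite !A; reflexivity).
      rewrite He, Hf.
      replace (f ** z ** e ** f ** z ** e) with (f ** (z ** (e ** f) ** z) ** e) by (rewrite !A; reflexivity).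
      unfold z. rewrite sinv_r. reflexivity. }
  assert (Hzz : z ** z = z).
  { rewrite <- Hz at 1 2.
    replace (f ** z ** e ** (f ** z ** e)) with (f ** (z ** (e ** f) ** z) ** e)
      by (rewrite !A; reflexivity).
    unfold z. rewrite sinv_r. exact Hz. }
  assert (Hzi : z ^- = z) by (apply idem_inv; exact Hzz).
  unfold z in Hzi. rewrite inv_inv in Hzi. rewrite Hzi. exact Hzz.
Qed.

Lemma idem_comm (e f : S) : e ** e = e -> f ** f = f -> e ** f = f ** e.
Proof.
  intros He Hf.
  assert (H1 := idem_mul e f He Hf). assert (H2 := idem_mul f e Hf He).
  transitivity ((e ** f) ^-); [symmetry; apply idem_inv; exact H1|].
  symmetry. apply sinv_unique.
  - replace (e ** f ** (f ** e) ** (e ** f)) with (e ** (f ** f) ** (e ** e) ** f)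
      by (rewrite !A; reflexivity).
    rewrite He, Hf. rewrite <- A. exact H1.
  - replace (f ** e ** (e ** f) ** (f ** e)) with (f ** (e ** e) ** (f ** f) ** e)
      by (rewrite !A; reflexivity).
    rewrite He, Hf. rewrite <- A. exact H2.
Qed.

Lemma inv_mul (u v : S) : (u ** v) ^- = v ^- ** u ^-.
Proof.
  symmetry. apply sinv_unique.
  - replace (u ** v ** (v ^- ** u ^-) ** (u ** v)) with (u ** ((v ** v ^-) ** (u ^- ** u)) ** v)
      by (rewrite !A; reflexivity).
    rewrite (idem_comm (v ** v ^-) (u ^- ** u)) by (apply rid || apply lid).
    replace (u ** (u ^- ** u ** (v ** v ^-)) ** v) with ((u ** u ^- ** u) ** (v ** v ^- ** v)) by (rewrite !A; reflexivity).
    rewrite !sinv_l. reflexivity.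
  - replace (v ^- ** u ^- ** (u ** v) ** (v ^- ** u ^-)) with (v ^- ** ((u ^- ** u) ** (v ** v ^-)) ** u ^-)
      by (rewrite !A; reflexivity).
    rewrite (idem_comm (u ^- ** u) (v ** v ^-)) by (apply rid || apply lid).
    replace (v ^- ** (v ** v ^- ** (u ^- ** u)) ** u ^-) with ((v ^- ** v ** v ^-) ** (u ^- ** u ** u ^-)) by (rewrite !A; reflexivity).
    rewrite !sinv_r. reflexivity.
Qed.

End IS.

Section Main.
Variable S : InverseSemigroup.
Local Notation "x ** y" := (@smul S x y) (at level 40, left associativity).
Local Notation "x ^-" := (@sinv S x) (at level 20).
Variable alpha : S -> S.
Hypothesis Halpha : is_automorphism alpha.

Lemma amul x y : alpha (x ** y) = alpha x ** alpha y.
Proof. apply (proj1 Halpha). Qed.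

Lemma ainv x : alpha (x ^-) = (alpha x) ^-.
Proof.
  apply sinv_unique; rewrite <- !amul; [rewrite sinv_l | rewrite sinv_r]; reflexivity.
Qed.

Hypothesis Hfix : forall x : S, is_fixed alpha x <-> is_idempotent x.

Lemma fixid x : x ** x = x -> alpha x = x.
Proof. intro H. apply Hfix. exact H. Qed.

Lemma step1 x y : psi alpha x = psi alpha y -> is_idempotent (x ** y ^-).
Proof.
  unfold psi. intro P.
  assert (Ha : alpha x = x ** x ^- ** alpha x).
  { rewrite <- (fixid (x ** x ^-)) by apply rid.
    rewrite <- amul, sinv_l. reflexivity. }
  assert (Hb : alpha x = x ** (y ^- ** alpha y)) by (rewrite <- P, A; exact Ha).
  assert (Hc : alpha y ** (alpha y) ^- = y ** y ^-).
  { rewrite <- ainv, <- amul. apply fixid, rid. }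
  apply Hfix. unfold is_fixed.
  rewrite amul, ainv, Hb.
  replace (x ** (y ^- ** alpha y) ** (alpha y) ^-) with (x ** y ^- ** (alpha y ** (alpha y) ^-))
    by (rewrite !A; reflexivity).
  rewrite Hc. rewrite !A. rewrite <- (A _ x (y ^-) y), <- (A _ x), sinv_r. reflexivity.
Qed.

Lemma step2 x : psi alpha x ** (psi alpha x) ^- = x ^- ** x.
Proof.
  unfold psi. rewrite inv_mul, inv_inv.
  replace (x ^- ** alpha x ** ((alpha x) ^- ** x)) with (x ^- ** (alpha x ** (alpha x) ^-) ** x)
    by (rewrite !A; reflexivity).
  rewrite <- ainv, <- amul, fixid by apply rid.
  rewrite A, sinv_r. reflexivity.
Qed.

Lemma part1 x y : psi alpha x = psi alpha y -> x = y.
Proof.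
  intro P.
  assert (He := step1 x y P). assert (Hf := step1 y x (eq_sym P)).
  unfold is_idempotent in *.
  assert (Hef : x ** y ^- = y ** x ^-).
  { rewrite <- (idem_inv _ _ He), inv_mul, inv_inv. reflexivity. }
  assert (Hg : x ^- ** x = y ^- ** y) by (rewrite <- !step2, P; reflexivity).
  assert (Hx : x = x ** y ^- ** y) by (rewrite <- A, <- Hg, A, sinv_l; reflexivity).
  assert (Hy : y = x ** y ^- ** x) by (rewrite Hef, <- A, Hg, A, sinv_l; reflexivity).
  transitivity (x ** y ^- ** (x ** y ^- ** x)).
  - rewrite <- Hy. exact Hx.
  - rewrite (A _ (x ** y ^-) (x ** y ^-) x), He. symmetry; exact Hy.
Qed.

End Main.

Theorem lemma2p1 (S : InverseSemigroup) (alpha : S -> S)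
  (Halpha : is_automorphism alpha) :
  ((forall x : S, is_fixed alpha x <-> is_idempotent x) ->
     forall x y : S, psi alpha x = psi alpha y -> x = y) /\
  ((forall x y : S, psi alpha x = psi alpha y -> x = y) ->
     forall x : S, is_fixed alpha x -> is_idempotent x).
Proof.
  split.
  - intros Hfix x y. apply (part1 S alpha Halpha Hfix).
  - intros Hinj x Hx. unfold is_fixed, is_idempotent in *.
    assert (E : smul (sinv x) x = x).
    { apply Hinj. unfold psi.
      rewrite (amul S alpha Halpha), (ainv S alpha Halpha), Hx.
      rewrite (idem_inv S _ (lid S x)). apply lid. }
    rewrite <- E at 3. rewrite <- E at 1 2. apply lid.
Qed.
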